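(* Let $a$ be an algebraic element of a ring $K$. (1) The minimal polynomial $f(x)$ of $a$ is unique; moreover, for every $g\in\mathbb{Z}[x]$ with $g(0)=0$ and $g(a)=0$ there exist a positive integer $k$ and $h\in\mathbb{Z}[x]$ such that $k\,g(x)=f(x)h(x)$ and $k$ divides every coefficient of $f$. (2) If $l\,\tilde f(a)=0$ for some positive integer $l$ and some monic $\tilde f\in\mathbb{Z}[x]$ with $\tilde f(0)=0$, then the minimal polynomial of $a$ has the form $f(x)=d\,f^*(x)$ with $d$ a positive integer and $f^*\in\mathbb{Z}[x]$ monic with $f^*(0)=0$.
   Context: Rings are associative and not necessarily unital. An element $a\in K$ is algebraic if $g(a)=0$ for some nonzero $g\in\mathbb{Z}[x]$ with $g(0)=0$. The minimal polynomial of an algebraic element $a$ is a polynomial $f\in\mathbb{Z}[x]$ with $f(0)=0$ and $f(a)=0$ that has the smallest possible degree among nonzero such polynomials and, among those of that degree, the smallest positive leading coefficient. *)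

(* Defs.v *)
From mathcomp Require Import all_boot all_order all_algebra.
Set Implicit Arguments. Unset Strict Implicit. Unset Printing Implicit Defensive.
Import GRing.Theory Num.Theory.
Local Open Scope ring_scope.

Definition nonunital_ring_axioms (V : zmodType) (mul : V -> V -> V) : Prop :=
  [/\ forall x y z, mul x (mul y z) = mul (mul x y) z,
      forall x y z, mul (x + y) z = mul x z + mul y z &
      forall x y z, mul x (y + z) = mul x y + mul x z].

(* a^n for n >= 1 (a^1 = a, a^(n+1) = a^n * a). *)
Definition npow (V : zmodType) (mul : V -> V -> V) (a : V) (n : nat) : V :=
  iter n.-1 (fun x => mul x a) a.

(* Evaluation g(a) of g in Z[x] with g(0) = 0 : sum_{i >= 1} g_i a^i
   (the constant term is ignored; it is 0 for the polynomials considered). *)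
Definition peval (V : zmodType) (mul : V -> V -> V) (g : {poly int}) (a : V) : V :=
  \sum_(1 <= i < size g) (npow mul a i) *~ g`_i.

Definition algebraic (V : zmodType) (mul : V -> V -> V) (a : V) : Prop :=
  exists g : {poly int}, [/\ g != 0, g`_0 = 0 & peval mul g a = 0].

Definition is_minpoly (V : zmodType) (mul : V -> V -> V) (a : V) (f : {poly int}) : Prop :=
  [/\ f != 0, f`_0 = 0, peval mul f a = 0, 0 < lead_coef f &
      forall g : {poly int}, g != 0 -> g`_0 = 0 -> peval mul g a = 0 ->
        (size f <= size g)%N /\
        (size g = size f -> 0 < lead_coef g -> lead_coef f <= lead_coef g)].

(* Main.v *)
Require Import Defs.
From mathcomp Require Import all_boot all_order all_algebra.
Import GRing.Theory Num.Theory.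
Local Open Scope ring_scope.

Lemma peval_big (V : zmodType) (mul : V -> V -> V) (g : {poly int}) (a : V) n :
  (size g <= n)%N -> peval mul g a = \sum_(1 <= i < n) npow mul a i *~ g`_i.
Proof.
move=> hn; rewrite /peval.
case: (leqP (size g) 1) => h1.
  rewrite big_geq // big_nat_cond big1 // => i /andP[/andP[hi _] _].
  by rewrite nth_default ?mulr0z //; exact: leq_trans h1 hi.
rewrite (big_cat_nat (ltnW h1) hn) /= [X in _ + X]big_nat_cond.
rewrite [X in _ + X]big1 ?addr0 //.
by move=> i /andP[/andP[hi _] _]; rewrite nth_default ?mulr0z.
Qed.

Lemma peval0 (V : zmodType) (mul : V -> V -> V) (a : V) : peval mul 0 a = 0.
Proof. by rewrite /peval size_poly0 big_geq. Qed.

Lemma pevalD (V : zmodType) (mul : V -> V -> V) (a : V) g h :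
  peval mul (g + h) a = peval mul g a + peval mul h a.
Proof.
set n := maxn (size g) (size h).
rewrite !(@peval_big _ _ _ _ n) ?leq_maxl ?leq_maxr ?size_polyD // -big_split.
by apply: eq_bigr => i _; rewrite coefD mulrzDr.
Qed.

Lemma pevalZ (V : zmodType) (mul : V -> V -> V) (a : V) c g :
  peval mul (c *: g) a = peval mul g a *~ c.
Proof.
rewrite !(@peval_big _ _ _ _ (size g)) ?size_scale_leq // mulrz_suml.
by apply: eq_bigr => i _; rewrite coefZ mulrC mulrzA.
Qed.

Lemma pevalN (V : zmodType) (mul : V -> V -> V) (a : V) g :
  peval mul (- g) a = - peval mul g a.
Proof. by rewrite -scaleN1r pevalZ mulrN1z. Qed.

Lemma pevalB (V : zmodType) (mul : V -> V -> V) (a : V) g h :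
  peval mul (g - h) a = peval mul g a - peval mul h a.
Proof. by rewrite pevalD pevalN. Qed.

Lemma peval_sum (V : zmodType) (mul : V -> V -> V) (a : V) I (r : seq I) (F : I -> {poly int}) :
  peval mul (\sum_(i <- r) F i) a = \sum_(i <- r) peval mul (F i) a.
Proof.
elim: r => [|x r IH]; first by rewrite !big_nil peval0.
by rewrite !big_cons pevalD IH.
Qed.

Section M.
Variables (V : zmodType) (mul : V -> V -> V).

Lemma mul0x (H : nonunital_ring_axioms mul) y : mul 0 y = 0.
Proof.
case: H => _ hDl _; have h := hDl 0 0 y; rewrite addr0 in h.
by apply: (addrI (mul 0 y)); rewrite addr0 -h.
Qed.

Lemma mulNx (H : nonunital_ring_axioms mul) x y : mul (- x) y = - mul x y.
Proof.
case: (H) => _ hDl _; apply: (addrI (mul x y)).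
by rewrite -hDl !subrr mul0x.
Qed.

Lemma mulnx (H : nonunital_ring_axioms mul) x y m : mul (x *+ m) y = mul x y *+ m.
Proof.
case: (H) => _ hDl _; elim: m => [|m IH]; first by rewrite !mulr0n mul0x.
by rewrite !mulrS hDl IH.
Qed.

Lemma mulzx (H : nonunital_ring_axioms mul) x y n : mul (x *~ n) y = mul x y *~ n.
Proof.
case: n => m; first by rewrite -!pmulrn mulnx.
by rewrite NegzE !mulrNz mulNx // -!pmulrn mulnx.
Qed.

Lemma mulsumx (H : nonunital_ring_axioms mul) I (r : seq I) (F : I -> V) y :
  mul (\sum_(i <- r) F i) y = \sum_(i <- r) mul (F i) y.
Proof.
case: (H) => _ hDl _.
elim: r => [|x r IH]; first by rewrite !big_nil mul0x.
by rewrite !big_cons hDl IH.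
Qed.

Lemma pevalMX (H : nonunital_ring_axioms mul) (a : V) (p : {poly int}) : p`_0 = 0 ->
  peval mul (p * 'X) a = mul (peval mul p a) a.
Proof.
move=> p0; have [->|pn0] := eqVneq p 0; first by rewrite mul0r peval0 mul0x.
have s1 : (1 <= size p)%N by rewrite size_poly_gt0.
rewrite (@peval_big _ _ _ _ (size p).+1); last first.
  by rewrite size_mulX // .
rewrite big_nat_recl // coefMX /= p0 mulr0z add0r.
rewrite (@peval_big _ _ _ _ (size p)) // mulsumx //.
rewrite [RHS]big_nat_cond [LHS]big_nat_cond.
apply: eq_bigr => i /andP[/andP[hi _] _].
rewrite coefMX /= mulzx //; congr (_ *~ _).
by rewrite /npow /= -{1}(prednK hi) iterS.
Qed.

Lemma pevalMXn (H : nonunital_ring_axioms mul) (a : V) (p : {poly int}) : p`_0 = 0 -> peval mul p a = 0 ->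
  forall j, peval mul (p * 'X^j) a = 0 /\ (p * 'X^j)`_0 = 0.
Proof.
move=> p0 pa; elim=> [|j [IH1 IH2]]; first by rewrite expr0 mulr1.
rewrite exprSr mulrA pevalMX // IH1 mul0x //; split=> //.
by rewrite coefMX.
Qed.

Lemma pevalM0 (H : nonunital_ring_axioms mul) (a : V) (p q : {poly int}) : p`_0 = 0 -> peval mul p a = 0 ->
  peval mul (q * p) a = 0.
Proof.
move=> p0 pa; rewrite -[q]coefK poly_def mulr_suml peval_sum big1 // => i _.
by rewrite -scalerAl mulrC pevalZ (pevalMXn H a p p0 pa i).1 mul0rz.
Qed.

End M.
From Stdlib Require Import Classical.
From mathcomp Require Import zify ring.
Import Order.TTheory.

Lemma min_ex (Q : nat -> Prop) : (exists n, Q n) -> exists n, Q n /\ forall m, Q m -> (n <= m)%N.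
Proof.
move=> [n Qn]; elim: n {-2}n (leqnn n) Qn => [|N IH] n hn Qn.
  move: hn; rewrite leqn0 => /eqP hn; subst n; by exists 0%N.
case: (classic (exists m, (m < n)%N /\ Q m)) => [[m [hm Qm]] | hno].
  by apply: (IH m) => //; lia.
exists n; split => // m Qm; rewrite leqNgt; apply/negP => h; apply: hno; by exists m.
Qed.

Lemma core (V : zmodType) (mul : V -> V -> V) (a : V) (f g : {poly int}) :
  nonunital_ring_axioms mul -> is_minpoly mul a f -> g`_0 = 0 -> peval mul g a = 0 ->
  exists2 c : int, c != 0 & exists q, c *: g = q * f.
Proof.
move=> H [fn0 f0 fa lf fmin] g0 ga.
set r := Pdiv.Idomain.modp g f.
set q := Pdiv.Idomain.divp g f.
set c := lead_coef f ^+ Pdiv.Idomain.scalp g f.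
have Hdiv : c *: g = q * f + r := Pdiv.Idomain.divp_eq g f.
have hr : r = c *: g - q * f by rewrite Hdiv addrAC subrr add0r.
have r0 : r = 0.
  apply/eqP; apply: contraT => rn0.
  have rc0 : r`_0 = 0 by rewrite hr coefB coefZ g0 coef0M f0 !mulr0 subrr.
  have ra : peval mul r a = 0 by rewrite hr pevalB pevalZ ga mul0rz (@pevalM0 V mul H a f q f0 fa) subrr.
  have [hs _] := fmin r rn0 rc0 ra.
  by have := Pdiv.Idomain.ltn_modpN0 g fn0; rewrite -/r ltnNge hs.
exists c; first exact: Pdiv.Idomain.lc_expn_scalp_neq0.
by exists q; rewrite Hdiv r0 addr0.
Qed.

Lemma zprim_rel (f g q : {poly int}) (c : int) : c != 0 -> c *: g = q * f ->
  zprimitive g = zprimitive q * zprimitive f.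
Proof. by move=> cn0 e; rewrite -(zprimitiveZ g cn0) e zprimitiveM. Qed.

Lemma cont_pos (f : {poly int}) : 0 < lead_coef f -> 0 < zcontents f.
Proof. by move=> h; rewrite -sgz_gt0 sgz_contents sgz_gt0. Qed.

Theorem proposition1 (V : zmodType) (mul : V -> V -> V) (a : V) :
  nonunital_ring_axioms mul -> algebraic mul a ->
  (* (1) existence and uniqueness of the minimal polynomial *)
  (exists f : {poly int}, is_minpoly mul a f) /\
  (forall f1 f2 : {poly int}, is_minpoly mul a f1 -> is_minpoly mul a f2 -> f1 = f2) /\
  (* (1) moreover *)
  (forall f g : {poly int}, is_minpoly mul a f -> g`_0 = 0 -> peval mul g a = 0 ->
     exists (k : nat) (h : {poly int}),
       [/\ (0 < k)%N, g *+ k = f * h & forall i : nat, (k%:Z %| f`_i)%Z]) /\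
  (* (2) *)
  (forall (l : nat) (ft : {poly int}),
     (0 < l)%N -> ft \is monic -> ft`_0 = 0 -> (peval mul ft a) *+ l = 0 ->
     forall f : {poly int}, is_minpoly mul a f ->
       exists (d : nat) (fs : {poly int}),
         [/\ (0 < d)%N, fs \is monic, fs`_0 = 0 & f = fs *+ d]).
Proof.
move=> H [g0 [g0n0 g00 g0a]].
split.
  have [n0 [[g1 [[g1n0 g10 g1a] sg1]] minn]] :=
    min_ex (fun n => exists g : {poly int}, [/\ g != 0, g`_0 = 0 & peval mul g a = 0] /\ size g = n)
      (ex_intro _ (size g0) (ex_intro _ g0 (conj (And3 g0n0 g00 g0a) erefl))).
  have ex2 : exists m, exists g : {poly int},
      [/\ [/\ g != 0, g`_0 = 0 & peval mul g a = 0], size g = n0, lead_coef g = m%:Z & (0 < m)%N].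
    have lg1 : lead_coef g1 != 0 by rewrite lead_coef_eq0.
    case: (ltrgt0P (lead_coef g1)) => hl; last by rewrite hl eqxx in lg1.
      exists `|lead_coef g1|%N, g1; split => //; first by rewrite gtz0_abs.
      by rewrite absz_gt0.
    exists `|lead_coef g1|%N, (- g1); split => //.
    - by split; rewrite ?oppr_eq0 ?coefN ?g10 ?oppr0 ?pevalN ?g1a ?oppr0.
    - by rewrite size_polyN.
    - by rewrite lead_coefN ltz0_abs.
    - by rewrite absz_gt0.
  have [m0 [[f [[fn0 f0 fa] sf lf m0p]] minm]] := min_ex _ ex2.
  exists f; split => //; first by rewrite lf ltz_nat.
  move=> g gn0 g0' ga; split.
    by rewrite sf; apply: minn; exists g.
  move=> sg lg; rewrite lf -(gtz0_abs lg) lez_nat; apply: minm.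
  exists g; split => //; first by rewrite sg.
  - by rewrite gtz0_abs.
  - by rewrite absz_gt0 gt_eqF.
split.
  move=> f1 f2 [f1n0 f10 f1a lf1 m1] [f2n0 f20 f2a lf2 m2].
  have [s12 _] := m1 f2 f2n0 f20 f2a.
  have [s21 _] := m2 f1 f1n0 f10 f1a.
  have ss : size f2 = size f1 by apply/eqP; rewrite eqn_leq s21 s12.
  have ll : lead_coef f1 = lead_coef f2.
    apply/eqP; rewrite eq_le (m1 f2 f2n0 f20 f2a).2 //.
    by rewrite (m2 f1 f1n0 f10 f1a).2.
  apply/eqP; rewrite -subr_eq0; apply/eqP.
  apply/eqP; apply: contraT => rn0.
  have hs := (m1 (f1 - f2) rn0 _ _).1.
  have : (size (f1 - f2)%R <= (size f1).-1)%N.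
    apply/leq_sizeP => j hj; rewrite coefB.
    case: (ltngtP j (size f1).-1) => hj'; first by rewrite ltnNge hj in hj'.
      have sj : (size f1 <= j)%N by lia.
      by rewrite !nth_default ?subrr // ss.
    by rewrite hj' -lead_coefE -ss -lead_coefE ll subrr.
  have sp : (0 < size f1)%N by rewrite size_poly_gt0.
  have r0 : (f1 - f2)`_0 = 0 by rewrite coefB f10 f20 subrr.
  have ra : peval mul (f1 - f2) a = 0 by rewrite pevalB f1a f2a subrr.
  move=> hle; have := leq_trans (hs r0 ra) hle.
  by rewrite leqNgt ltn_predL sp.
have moreover : forall f g : {poly int}, is_minpoly mul a f -> g`_0 = 0 -> peval mul g a = 0 ->
     exists (k : nat) (h : {poly int}),
       [/\ (0 < k)%N, g *+ k = f * h & forall i : nat, (k%:Z %| f`_i)%Z].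
  move=> f g mf gz ga.
  have [c cn0 [q e]] := @core V mul a f _ H mf gz ga.
  have zr := @zprim_rel _ _ _ _ cn0 e.
  have cp : 0 < zcontents f by apply: cont_pos; case: mf.
  exists `|zcontents f|%N, (zcontents g *: zprimitive q); split.
  - by rewrite absz_gt0 gt_eqF.
  - rewrite -scaler_nat natz (gtz0_abs cp) {1}[g]zpolyEprim zr {3}[f]zpolyEprim.
    rewrite -!mul_polyC; ring.
  - move=> i; rewrite (gtz0_abs cp).
    have -> : f`_i = zcontents f * (zprimitive f)`_i by rewrite -coefZ -zpolyEprim.
    exact: dvdz_mulr.
split => //.
move=> l ft lp ftm ft0 fta f mf.
have fn0 : f != 0 by case: mf.
have lf : 0 < lead_coef f by case: mf.
have cp : 0 < zcontents f by apply: cont_pos.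
have gz : (ft *+ l)`_0 = 0 by rewrite coefMn ft0 mul0rn.
have ga : peval mul (ft *+ l) a = 0 by rewrite -scaler_nat pevalZ natz -pmulrn.
have [c cn0 [q e]] := @core V mul a f _ H mf gz ga.
have zr := @zprim_rel _ _ _ _ cn0 e.
rewrite -scaler_nat zprimitiveZ ?natz ?pnatr_eq0 -?lt0n // zprimitive_monic // in zr.
have lz : lead_coef (zprimitive f) = 1.
  have h1 : lead_coef (zprimitive q) * lead_coef (zprimitive f) = 1.
    by rewrite -lead_coefM -zr (monicP ftm).
  have h2 : 0 < lead_coef (zprimitive f).
    by rewrite -sgz_gt0 sgz_lead_primitive fn0.
  move: h1 h2; generalize (lead_coef (zprimitive q)) (lead_coef (zprimitive f)) => x y h1 h2.
  have := congr1 absz h1; rewrite abszM => /eqP; rewrite muln_eq1 => /andP[_ /eqP hy].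
  by rewrite -(gtz0_abs h2) hy.
exists `|zcontents f|%N, (zprimitive f); split.
- by rewrite absz_gt0 gt_eqF.
- by apply/monicP.
- apply/eqP; move: (let: And5 _ f0 _ _ _ := mf in f0).
  rewrite {1}[f]zpolyEprim coefZ => /eqP; rewrite mulf_eq0 => /orP[|//].
  by rewrite gt_eqF.
- by rewrite -scaler_nat natz (gtz0_abs cp) -zpolyEprim.
Qed.
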